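(* Let $n\ge 1$ and $d\ge 1$ be integers, let $\mathcal{X}\subset\mathbb{R}^d$ be compact and convex, let $\mathbf{x}_0\in\mathcal{X}$, let $w_0,w_1,\dots,w_n\in\mathbb{R}$, and let $\mathbf{t}_1,\dots,\mathbf{t}_n\in\mathbb{R}^d$. Consider the $n$-player game in which player $i\in[n]=\{1,\dots,n\}$ chooses $\mathbf{x}_i\in\mathcal{X}$ and incurs the loss $$\ell_i(\mathbf{x}_1,\dots,\mathbf{x}_n)=\Big\|w_0\mathbf{x}_0+\sum_{j=1}^n w_j\mathbf{x}_j-\mathbf{t}_i\Big\|_2^2 .$$ Then this game is an (exact) potential game with potential function $$\phi(\mathbf{x}_1,\dots,\mathbf{x}_n)=\Big\|\sum_{i=0}^n w_i\mathbf{x}_i\Big\|_2^2-2\sum_{i=1}^n w_i\mathbf{t}_i^\top\mathbf{x}_i,$$ that is, for every $i\in[n]$, every $(\mathbf{x}_1,\dots,\mathbf{x}_n)\in\mathcal{X}^n$ and every $\mathbf{y}\in\mathcal{X}$, $$\ell_i(\mathbf{x}_i,\mathbf{x}_{-i})-\ell_i(\mathbf{y},\mathbf{x}_{-i})=\phi(\mathbf{x}_i,\mathbf{x}_{-i})-\phi(\mathbf{y},\mathbf{x}_{-i}).$$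
   Context: For a profile $\mathbf{x}=(\mathbf{x}_1,\dots,\mathbf{x}_n)$, $(\mathbf{y},\mathbf{x}_{-i})$ denotes the profile obtained by replacing player $i$'s action $\mathbf{x}_i$ with $\mathbf{y}$ and keeping all other actions fixed. *)

(* Defs.v *)
From HB Require Import structures.
From mathcomp Require Import all_boot all_order all_algebra.
From mathcomp Require Import all_classical all_reals all_analysis.
Set Implicit Arguments. Unset Strict Implicit. Unset Printing Implicit Defensive.
Import Order.TTheory GRing.Theory Num.Theory.
Import numFieldNormedType.Exports.
Local Open Scope ring_scope.
Local Open Scope classical_set_scope.

Definition sqnorm (R : realType) (d : nat) (v : 'rV[R]_d) : R :=
  \sum_(k < d) (v 0 k) ^+ 2.

Definition dotv (R : realType) (d : nat) (u v : 'rV[R]_d) : R :=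
  \sum_(k < d) u 0 k * v 0 k.

Definition convex_setv (R : realType) (d : nat) (X : set 'rV[R]_d) : Prop :=
  forall x y, X x -> X y -> forall t : R, 0 <= t -> t <= 1 ->
    X (t *: x + (1 - t) *: y).

Definition upd (R : realType) (n d : nat) (x : 'I_n -> 'rV[R]_d) (i : 'I_n)
  (y : 'rV[R]_d) : 'I_n -> 'rV[R]_d :=
  fun j => if j == i then y else x j.

Definition loss (R : realType) (n d : nat) (w0 : R) (x0 : 'rV[R]_d)
  (w : 'I_n -> R) (t : 'I_n -> 'rV[R]_d) (i : 'I_n) (x : 'I_n -> 'rV[R]_d) : R :=
  sqnorm (w0 *: x0 + \sum_(j < n) w j *: x j - t i).

Definition potential (R : realType) (n d : nat) (w0 : R) (x0 : 'rV[R]_d)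
  (w : 'I_n -> R) (t : 'I_n -> 'rV[R]_d) (x : 'I_n -> 'rV[R]_d) : R :=
  sqnorm (w0 *: x0 + \sum_(i < n) w i *: x i)
  - 2 * \sum_(i < n) w i * dotv (t i) (x i).

(* Main.v *)
Require Import Defs.
From HB Require Import structures.
From mathcomp Require Import all_boot all_order all_algebra.
From mathcomp Require Import all_classical all_reals all_analysis.
From mathcomp Require Import ring.
Import Order.TTheory GRing.Theory Num.Theory.
Import numFieldNormedType.Exports.
Local Open Scope ring_scope.
Local Open Scope classical_set_scope.

Lemma L1 (R : realType) (n d : nat) (w : 'I_n -> R) (x : 'I_n -> 'rV[R]_d) i y :
  \sum_(j < n) w j *: upd x i y j
    = \sum_(j < n) w j *: x j + w i *: (y - x i).
Proof.
  rewrite (bigD1 i) //= [in RHS](bigD1 i) //= /upd eqxx.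
  under eq_bigr => j /negbTE -> do [].
  rewrite scalerBr; set s := \sum_(j < n | _) _.
  by rewrite [RHS]addrAC [_ + (_ - _)]addrC subrK.
Time Qed.

Lemma L2 (R : realType) (n d : nat) (w : 'I_n -> R) (t x : 'I_n -> 'rV[R]_d) i y :
  \sum_(j < n) w j * dotv (t j) (upd x i y j)
    = \sum_(j < n) w j * dotv (t j) (x j) + w i * (dotv (t i) y - dotv (t i) (x i)).
Proof.
  rewrite (bigD1 i) //= [in RHS](bigD1 i) //= /upd eqxx.
  under eq_bigr => j /negbTE -> do [].
  set s := \sum_(j < n | _) _.
  move: s (dotv (t i) y) (dotv (t i) (x i)) (w i) => s a b c. Time ring.
Time Qed.

Lemma L3 (R : realType) (d : nat) (V W T : 'rV[R]_d) :
  sqnorm (V - T) - sqnorm (V + W - T) = sqnorm V - sqnorm (V + W) + 2 * dotv T W.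
Proof.
rewrite /sqnorm /dotv -!sumrB mulr_sumr -big_split /=.
apply: eq_bigr => k _; rewrite !mxE.
move: (V 0 k) (W 0 k) (T 0 k) => a b c. Time ring.
Time Qed.

Lemma L4 (R : realType) (d : nat) (T y z : 'rV[R]_d) (c : R) :
  dotv T (c *: (y - z)) = c * (dotv T y - dotv T z).
Proof.
rewrite /dotv -sumrB mulr_sumr; apply: eq_bigr => k _; rewrite !mxE.
move: (T 0 k) (y 0 k) (z 0 k) => a b e. ring.
Qed.

Lemma Key (R : realType) (A B C D F W : R) :
  A - B + 2 * (W * (C - D)) = A - 2 * F - (B - 2 * (F + W * (C - D))).
Proof. ring. Qed.

Theorem theorem1 (R : realType) (n d : nat) (hn : (1 <= n)%N) (hd : (1 <= d)%N)
  (X : set 'rV[R]_d) (hXc : compact X) (hXv : convex_setv X)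
  (x0 : 'rV[R]_d) (hx0 : X x0) (w0 : R) (w : 'I_n -> R) (t : 'I_n -> 'rV[R]_d) :
  forall (i : 'I_n) (x : 'I_n -> 'rV[R]_d) (y : 'rV[R]_d),
    (forall j, X (x j)) -> X y ->
    loss w0 x0 w t i x - loss w0 x0 w t i (upd x i y)
    = potential w0 x0 w t x - potential w0 x0 w t (upd x i y).
Proof.
move=> i x y _ _.
rewrite /loss /potential L1 L2 (addrA (w0 *: x0)) L3 L4.
exact: Key.
Time Qed.
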